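(* Let $\Gamma$ be an extensive-form game. If $\Gamma'\succeq\Gamma$ and $\Gamma'$ is a perfect-recall game, then $\Gamma'\succeq\mathrm{pr}(\Gamma)$. Moreover, $\mathrm{pr}(\Gamma)$ is a perfect-recall game.
   Context: An extensive-form game consists of a finite rooted tree (nodes $\mathcal H$, leaves $\mathcal Z$, actions at nonterminal nodes), a finite player set $\mathcal N$ plus chance, an assignment of nonterminal nodes to players or chance ($\mathcal H_i$ the nodes of $i$), chance distributions, utilities $u_i:\mathcal Z\to\mathbb R_{\ge0}$, and for each $i$ a partition $\mathcal I_i$ of $\mathcal H_i$ into infosets whose nodes share an action set. For a node $h$ with root-to-$h$ path $(h_0,\dots,h_{d-1})$ (excluding $h$), $\mathrm{obs}(h)=(i_k,I_k,a_k)_{k}$ lists the player at $h_k$, the infoset of $h_k$, and the action taken; $\mathrm{obs}_i(h)$ is the subsequence with $i_k=i$. Player $i$ has perfect recall if $\mathrm{obs}_i(h)=\mathrm{obs}_i(h')$ whenever $h,h'$ are in the same infoset of $i$; the game is a perfect-recall game if all players have perfect recall. For games with the same tree and utilities, $\Gamma'\succeq\Gamma$ means for every player $i$, every infoset of $i$ in $\Gamma$ is a disjoint union of infosets of $i$ in $\Gamma'$. $\mathrm{pr}(\Gamma)$ is the game with the same tree and utilities as $\Gamma$ in which, for every player $i$, each $I\in\mathcal I_i$ is partitioned into the classes of $h\sim h'\iff\mathrm{obs}_i(h)=\mathrm{obs}_i(h')$ (computed in $\Gamma$). *)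

(* Defs.v *)
(* Extensive-form games with a finite rooted tree given by a
   parent map; information sets given as explicit partitions ({set {set T}}). *)
From HB Require Import structures.
From mathcomp Require Import all_boot all_order all_algebra.
Set Implicit Arguments. Unset Strict Implicit. Unset Printing Implicit Defensive.
Import Order.TTheory GRing.Theory Num.Theory.
Local Open Scope ring_scope.

(* The common part of the games: tree, player/chance assignment, chance
   distributions, utilities.  N = players, T = nodes, A = actions. *)
Record efg_base (N T : finType) (A : eqType) (R : realFieldType) := EfgBase {
  root : T;
  par : T -> option (T * A);   (* parent of a node and action leading to it *)
  player : T -> option N;      (* None = chance (only used at nonterminal nodes) *)
  chance : T -> A -> R;
  util : N -> T -> R
}.

Section Defs.
Variables (N T : finType) (A : eqType) (R : realFieldType).
Variable G : efg_base N T A R.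

Definition parent (h : T) : option T := omap fst (par G h).
Definition parent_or_self (h : T) : T := odflt h (parent h).

Definition actions (h : T) : pred A :=
  fun a => [exists c : T, par G c == Some (h, a)].
Definition terminal (h : T) : bool := [forall c : T, parent c != Some h].

Definition wf_base : Prop :=
  [/\ par G (root G) = None /\
      (forall h, h != root G -> parent h != None),
      (forall h, exists n, iter n parent_or_self h = root G),
      (forall c1 c2 p a, par G c1 = Some (p, a) -> par G c2 = Some (p, a) -> c1 = c2),
      (forall h, ~~ terminal h -> player G h = None ->
          (forall a, 0 <= chance G h a) /\
          (forall a, ~~ actions h a -> chance G h a = 0) /\
          \sum_(c | parent c == Some h)
             (if par G c is Some (_, a) then chance G h a else 0) = 1)
    & (forall i h, terminal h -> 0 <= util G i h)].

Definition nodes_of (i : N) : {set T} :=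
  [set h | ~~ terminal h & player G h == Some i].

Definition infostruct := N -> {set {set T}}.

Definition is_game (info : infostruct) : Prop :=
  wf_base /\
  forall i, partition (info i) (nodes_of i) /\
    (forall I, I \in info i -> forall h h', h \in I -> h' \in I ->
        actions h =1 actions h').

(* root-to-h path (h_0,a_0),...,(h_{d-1},a_{d-1}); the fuel #|T| exceeds
   the depth of any node of a well-formed tree. *)
Fixpoint hist_rec (n : nat) (h : T) : seq (T * A) :=
  match n with
  | 0 => [::]
  | n'.+1 => if par G h is Some (p, a) then rcons (hist_rec n' p) (p, a) else [::]
  end.
Definition hist (h : T) : seq (T * A) := hist_rec #|T| h.

(* infoset of node h (set0 at chance nodes) *)
Definition infoset_of (info : infostruct) (h : T) : {set T} :=
  if player G h is Some i then pblock (info i) h else set0.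

Definition obs (info : infostruct) (h : T) : seq (option N * {set T} * A) :=
  [seq (player G p.1, infoset_of info p.1, p.2) | p <- hist h].

Definition obs_i (info : infostruct) (i : N) (h : T) :=
  [seq o <- obs info h | o.1.1 == Some i].

Definition perfect_recall_player (info : infostruct) (i : N) : Prop :=
  forall I, I \in info i -> forall h h', h \in I -> h' \in I ->
    obs_i info i h = obs_i info i h'.

Definition perfect_recall_game (info : infostruct) : Prop :=
  is_game info /\ forall i, perfect_recall_player info i.

(* Gamma' >= Gamma : every infoset of Gamma is a disjoint union of infosets
   of Gamma' (of the same player) *)
Definition refines (info' info : infostruct) : Prop :=
  forall i, forall I, I \in info i ->
    exists S : {set {set T}},
      [/\ S \subset info' i, trivIset S & I = cover S].

Definition pr_info (info : infostruct) : infostruct :=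
  fun i => \bigcup_(I in info i)
             [set [set h' in I | obs_i info i h' == obs_i info i h] | h in I].

End Defs.

(* Main.v *)
Require Import Defs.
From mathcomp Require Import all_boot all_order all_algebra.
From mathcomp Require Import zify.
Set Implicit Arguments. Unset Strict Implicit. Unset Printing Implicit Defensive.

Section Proofs.
Variables (N T : finType) (A : eqType) (R : realFieldType).
Variable G : efg_base N T A R.
Hypothesis wf : wf_base G.

Lemma par_root : par G (Defs.root G) = None.
Proof. by case: wf => [[]]. Qed.

Lemma pos_root : parent_or_self G (Defs.root G) = Defs.root G.
Proof. by rewrite /parent_or_self /parent par_root. Qed.

Lemma iter_root_fix m : iter m (parent_or_self G) (Defs.root G) = Defs.root G.
Proof. by elim: m => //= m ->; rewrite pos_root. Qed.

Lemma iter_root x : iter #|T|.-1 (parent_or_self G) x = Defs.root G.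
Proof.
have ex : exists n, iter n (parent_or_self G) x == Defs.root G.
  by case: wf => _ H _ _ _; case: (H x) => n Hn; exists n; apply/eqP.
case: (ex_minnP ex) => n /eqP Hn Hmin.
have key : forall i j, i < j -> j <= n ->
    iter i (parent_or_self G) x = iter j (parent_or_self G) x -> False.
  move=> i j lij ljn E.
  have : iter (n - j + i) (parent_or_self G) x == Defs.root G.
    by rewrite iterD E -iterD subnK // Hn.
  move/Hmin; lia.
have U : uniq [seq iter k (parent_or_self G) x | k <- iota 0 n.+1].
  rewrite map_inj_in_uniq ?iota_uniq // => i j; rewrite !mem_iota !add0n /= => Hi Hj Eij.
  case: (ltngtP i j) => // lij; exfalso.
  - by apply: (key i j lij _ Eij); lia.
  - by apply: (key j i lij _ (esym Eij)); lia.
have := max_card (mem [seq iter k (parent_or_self G) x | k <- iota 0 n.+1]).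
rewrite (card_uniqP U) size_map size_iota => Hle.
have -> : #|T|.-1 = (#|T|.-1 - n) + n by rewrite subnK //; lia.
by rewrite iterD Hn iter_root_fix.
Qed.

Lemma hist_stab n x : iter n (parent_or_self G) x = Defs.root G ->
  hist_rec G n x = hist_rec G n.+1 x.
Proof.
elim: n x => [|n IH] x.
  by move=> /= ->; rewrite par_root.
rewrite iterSr /=; case E: (par G x) => [[p a]|] //.
have -> : parent_or_self G x = p by rewrite /parent_or_self /parent E.
by move/IH => ->.
Qed.

Lemma cardT_pred : #|T| = #|T|.-1.+1.
Proof. by rewrite prednK //; apply/card_gt0P; exists (Defs.root G). Qed.

Lemma hist_cases h : (par G h = None /\ hist G h = [::]) \/
  exists p a, par G h = Some (p, a) /\ hist G h = rcons (hist G p) (p, a).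
Proof.
rewrite /hist cardT_pred /=; case E: (par G h) => [[p a]|]; last by left.
by right; exists p, a; split => //; rewrite (hist_stab (iter_root p)).
Qed.

Lemma hist_child n h x : x \in hist_rec G n h -> exists c, par G c = Some x.
Proof.
elim: n h => [|n IH] h //=; case E: (par G h) => [[p a]|] //.
by rewrite mem_rcons inE => /orP [/eqP -> | /IH //]; exists h.
Qed.

Lemma hist_prefix t : forall h s p a, hist G h = s ++ (p, a) :: t -> hist G p = s.
Proof.
elim/last_ind: t => [|t y IH] h s p a.
  case: (hist_cases h) => [[_ ->]|[p0 [a0 [_ ->]]]]; first by case: s.
  by rewrite cats1 => /rcons_inj [E <- _].
case: (hist_cases h) => [[_ ->]|[p0 [a0 [_ ->]]]]; first by case: s.
rewrite -rcons_cons -rcons_cat => /rcons_inj [E _].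
exact: (IH p0 s p a E).
Qed.

Lemma filter_rcons_split (P : pred (T * A)) u L0 x :
  filter P u = rcons L0 x -> exists s t, u = s ++ x :: t /\ filter P s = L0.
Proof.
elim/last_ind: u L0 x => [|u y IH] L0 x /=; first by case: L0.
rewrite filter_rcons; case: ifP => Py.
  by move=> /rcons_inj [<- ->]; exists u, [::]; rewrite cats1.
move=> /IH [s [t [-> E]]]; exists s, (rcons t y); split => //.
by rewrite rcons_cat rcons_cons.
Qed.


Definition Lf (i : N) (h : T) := filter (fun p : T * A => player G p.1 == Some i) (hist G h).

Lemma obs_iE (Z : infostruct N T) i h : obs_i G Z i h =
  map (fun p : T * A => (player G p.1, infoset_of G Z p.1, p.2)) (Lf i h).
Proof. by rewrite /obs_i /obs filter_map. Qed.

Lemma Lf_rcons i h L0 x : Lf i h = rcons L0 x ->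
  Lf i x.1 = L0 /\ x.1 \in nodes_of G i.
Proof.
move=> E; have := E; rewrite /Lf => /filter_rcons_split [s [t [Eh Es]]].
case: x E Eh => p a E Eh /=; split; first by rewrite /Lf (hist_prefix Eh).
have : (p, a) \in hist G h by rewrite Eh mem_cat inE eqxx orbT.
case/hist_child => c Hc.
have : (p, a) \in Lf i h by rewrite E mem_rcons inE eqxx.
rewrite mem_filter /= => /andP [Hpl _].
rewrite inE Hpl andbT; apply/negP => /forallP /(_ c).
by rewrite /parent Hc /= eqxx.
Qed.

Lemma rcons_ex (s : seq (T * A)) : s <> [::] -> exists L0 x, s = rcons L0 x.
Proof. by case/lastP: s => // L0 x _; exists L0, x. Qed.

Lemma obs_transfer (X Y : infostruct N T) i :
  (forall p q, p \in nodes_of G i -> q \in nodes_of G i ->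
     infoset_of G X p = infoset_of G X q -> obs_i G X i p = obs_i G X i q ->
     infoset_of G Y p = infoset_of G Y q) ->
  forall h h', obs_i G X i h = obs_i G X i h' -> obs_i G Y i h = obs_i G Y i h'.
Proof.
move=> H h h'.
suff: forall n h h', size (Lf i h) = n ->
  obs_i G X i h = obs_i G X i h' -> obs_i G Y i h = obs_i G Y i h' by apply.
elim=> [|n IH] {}h {}h'; rewrite !obs_iE.
  move/size0nil => E1; rewrite E1 /= => E2.
  by have := congr1 size E2; rewrite size_map /= => /esym/size0nil ->.
move=> Hs E.
have Hs' : size (Lf i h') = n.+1 by rewrite -Hs; have := congr1 size E; rewrite !size_map.
have [L0 [x Ex]] : exists L0 x, Lf i h = rcons L0 x.
  by apply: rcons_ex => E0; rewrite E0 in Hs.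
have [L0' [x' Ex']] : exists L0 x, Lf i h' = rcons L0 x.
  by apply: rcons_ex => E0; rewrite E0 in Hs'.
have [HL0 Hx] := Lf_rcons Ex; have [HL0' Hx'] := Lf_rcons Ex'.
move: E; rewrite Ex Ex' !map_rcons => /rcons_inj [E0 Epl Einf Ea].
have Eo : obs_i G X i x.1 = obs_i G X i x'.1 by rewrite !obs_iE HL0 HL0'.
have := IH x.1 x'.1; rewrite !obs_iE HL0 HL0' => IH'.
rewrite IH'; last by [] ; last by rewrite Ex size_rcons in Hs; case: Hs.
by rewrite Epl Ea (H _ _ Hx Hx' Einf Eo).
Qed.

Lemma infoset_nodes (Z : infostruct N T) i p : p \in nodes_of G i ->
  infoset_of G Z p = pblock (Z i) p.
Proof. by rewrite inE /infoset_of => /andP [_ /eqP ->]. Qed.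


Section Part.
Variable (info : infostruct N T) (i : N).
Hypothesis Hp : partition (info i) (nodes_of G i).

Definition Rr : rel T := [rel x y | (pblock (info i) x == pblock (info i) y) &&
  (obs_i G info i x == obs_i G info i y)].

Lemma Rr_eq : {in nodes_of G i & &, equivalence_rel Rr}.
Proof.
move=> x y z _ _ _; rewrite /Rr /=; split => [|/andP [/eqP e1 /eqP e2]].
  by rewrite !eqxx.
by rewrite e1 e2.
Qed.

Lemma pr_eq : pr_info G info i = equivalence_partition Rr (nodes_of G i).
Proof.
case/and3P: Hp => /eqP Hcov Htriv _.
have memN : forall z, (~~terminal G z && (player G z == Some i)) = (z \in nodes_of G i).
  by move=> z; rewrite inE.
apply/setP => J; rewrite /pr_info /equivalence_partition.
apply/bigcupP/imsetP.
  move=> [I HI /imsetP [h Hh ->]].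
  have hN : h \in nodes_of G i by rewrite -Hcov; apply/bigcupP; exists I.
  exists h => //; apply/setP => y; rewrite !inE /Rr /= ?memN (def_pblock Htriv HI Hh).
  case: (boolP (y \in I)) => yI /=.
    have yN : y \in nodes_of G i by rewrite -Hcov; apply/bigcupP; exists I.
    by rewrite (def_pblock Htriv HI yI) eqxx /= eq_sym yN.
  case: (boolP (y \in nodes_of G i)) => //= yN.
  apply/esym/negbTE; apply/negP => /andP [/eqP E _]; move: yI.
  by rewrite E mem_pblock Hcov yN.
move=> [h hN ->].
have hc : h \in cover (info i) by rewrite Hcov.
exists (pblock (info i) h); first exact: pblock_mem.
apply/imsetP; exists h; first by rewrite mem_pblock.
apply/setP => y; rewrite !inE /Rr /= ?memN.
case: (boolP (y \in pblock (info i) h)) => yI /=.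
  have yN : y \in nodes_of G i.
    by rewrite -Hcov; apply/bigcupP; exists (pblock (info i) h) => //; exact: pblock_mem.
  rewrite yN /=; have yI2 := yI; rewrite -(eq_pblock _ Htriv hc) in yI2; rewrite yI2 /=. by rewrite eq_sym.
case: (boolP (y \in nodes_of G i)) => //= yN.
by rewrite -(eq_pblock _ Htriv hc) in yI; rewrite (negbTE yI).
Qed.

Lemma pr_part : partition (pr_info G info i) (nodes_of G i).
Proof. by rewrite pr_eq; apply: equivalence_partitionP; exact: Rr_eq. Qed.

Lemma pr_pblock x y : x \in nodes_of G i -> y \in nodes_of G i ->
  (y \in pblock (pr_info G info i) x) = Rr x y.
Proof. by move=> xN yN; rewrite pr_eq (pblock_equivalence_partition Rr_eq). Qed.

End Part.

Lemma ref_block (info info' : infostruct N T) i :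
  refines info' info -> partition (info i) (nodes_of G i) ->
  partition (info' i) (nodes_of G i) ->
  forall p q, p \in nodes_of G i -> q \in nodes_of G i ->
  pblock (info' i) p = pblock (info' i) q -> pblock (info i) p = pblock (info i) q.
Proof.
move=> Href Hp Hp' p q pN qN E.
case/and3P: Hp => /eqP Hcov Htriv _; case/and3P: Hp' => /eqP Hcov' Htriv' _.
have pc : p \in cover (info i) by rewrite Hcov.
have [S [Ssub _ ES]] := Href i _ (pblock_mem pc).
have : p \in cover S by rewrite -ES mem_pblock.
case/bigcupP => K KS pK.
have KI : K \in info' i by apply: (subsetP Ssub).
have qK : q \in K.
  by rewrite -(def_pblock Htriv' KI pK) E mem_pblock Hcov'.
have qI : q \in pblock (info i) p by rewrite ES; apply/bigcupP; exists K.
by apply/eqP; rewrite eq_pblock.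
Qed.

End Proofs.

Theorem corollary1 (N T : finType) (A : eqType) (R : realFieldType)
    (G : efg_base N T A R) (info info' : infostruct N T) :
  is_game G info -> is_game G info' ->
  refines info' info -> perfect_recall_game G info' ->
  refines info' (pr_info G info) /\ perfect_recall_game G (pr_info G info).
Proof.
move=> [wf Hg] [_ Hg'] Href [_ Hpr'].
have covE : forall (Z : infostruct N T) i, partition (Z i) (nodes_of G i) ->
    cover (Z i) = nodes_of G i by move=> Z i /and3P [/eqP -> _ _].
have trivE : forall (Z : infostruct N T) i, partition (Z i) (nodes_of G i) ->
    trivIset (Z i) by move=> Z i /and3P [_ -> _].
have inN : forall (Z : infostruct N T) i J x, partition (Z i) (nodes_of G i) ->
    J \in Z i -> x \in J -> x \in nodes_of G i.
  by move=> Z i J x HP HJ xJ; rewrite -(covE _ _ HP); apply/bigcupP; exists J.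
split.
  move=> i J HJ.
  have Hp := (Hg i).1; have Hp' := (Hg' i).1; have Hpp := pr_part Hp.
  exists [set K in info' i | K \subset J]; split.
  - by apply/subsetP => K; rewrite inE => /andP [].
  - apply: trivIsetS (trivE _ _ Hp'); by apply/subsetP => K; rewrite inE => /andP [].
  apply/setP => x; apply/idP/bigcupP.
    move=> xJ; have xN := inN _ _ _ _ Hpp HJ xJ.
    have xc : x \in cover (info' i) by rewrite covE.
    exists (pblock (info' i) x); last by rewrite mem_pblock.
    rewrite inE pblock_mem //=; apply/subsetP => y yK.
    have yN := inN _ _ _ _ Hp' (pblock_mem xc) yK.
    rewrite -(def_pblock (trivE _ _ Hpp) HJ xJ) pr_pblock //= .
    apply/andP; split; apply/eqP.
      apply: (ref_block Href Hp Hp' xN yN).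
      by apply/esym/same_pblock => //; exact: trivE Hp'.
    apply: (obs_transfer wf (X := info')).
      move=> p q pN qN; rewrite !(@infoset_nodes _ _ _ _ _ _ _ _ pN) !(@infoset_nodes _ _ _ _ _ _ _ _ qN) => E _.
      exact: (ref_block Href Hp Hp' pN qN E).
    by apply: (Hpr' i _ (pblock_mem xc)) => //; rewrite mem_pblock.
  by move=> [K]; rewrite inE => /andP [_ /subsetP sub] /sub.
have prR : forall i J h h', J \in pr_info G info i -> h \in J -> h' \in J ->
    [/\ h \in nodes_of G i, h' \in nodes_of G i & Rr G info i h h'].
  move=> i J h h' HJ hJ h'J.
  have Hpp := pr_part (Hg i).1.
  have hN := inN _ _ _ _ Hpp HJ hJ; have h'N := inN _ _ _ _ Hpp HJ h'J.
  split => //; rewrite -pr_pblock ?(Hg i).1 //.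
  by rewrite (def_pblock (trivE _ _ Hpp) HJ hJ).
split; last first.
  move=> i J HJ h h' hJ h'J.
  have [hN h'N /andP [_ /eqP Eo]] := prR i J h h' HJ hJ h'J.
  apply: (obs_transfer wf (X := info)) Eo.
  move=> p q pN qN; rewrite !(@infoset_nodes _ _ _ _ _ _ _ _ pN) !(@infoset_nodes _ _ _ _ _ _ _ _ qN) => E1 E2.
  apply/eqP; rewrite eq_pblock ?(trivE _ _ (pr_part (Hg i).1)) ?(covE _ _ (pr_part (Hg i).1)) //.
  by rewrite pr_pblock ?(Hg i).1 // /Rr /= E1 E2 !eqxx.
split => // i; split; first exact: pr_part (Hg i).1.
move=> J HJ h h' hJ h'J.
have [hN h'N /andP [E _]] := prR i J h h' HJ hJ h'J.
have Hp := (Hg i).1.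
have hc : h \in cover (info i) by rewrite covE.
apply: ((Hg i).2 (pblock (info i) h)); first exact: pblock_mem.
  by rewrite mem_pblock.
by rewrite -eq_pblock // trivE.
Qed.
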